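(* For every integer $n\ge 0$, $$\sum_{j,k}\genfrac{[}{]}{0pt}{}{n}{k}\genfrac{\{}{\}}{0pt}{}{k}{j}\binom{n}{j}(-1)^k=(-1)^n .$$
   Context: Here $\genfrac{[}{]}{0pt}{}{n}{k}$ denotes the unsigned (absolute) Stirling number of the first kind and $\genfrac{\{}{\}}{0pt}{}{n}{k}$ the ordinary Stirling number of the second kind (Knuth's notation), with $\genfrac{[}{]}{0pt}{}{0}{0}=\genfrac{\{}{\}}{0pt}{}{0}{0}=1$, $\genfrac{[}{]}{0pt}{}{n}{0}=\genfrac{\{}{\}}{0pt}{}{n}{0}=0$ for $n>0$, and $\genfrac{[}{]}{0pt}{}{n}{k}=\genfrac{\{}{\}}{0pt}{}{n}{k}=0$ for $0\le n<k$. The double sum is over all integers $j,k$ with $0\le j\le k\le n$. *)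

(* Defs.v *)
From mathcomp Require Import all_boot all_order all_algebra.
Set Implicit Arguments. Unset Strict Implicit. Unset Printing Implicit Defensive.

Fixpoint stirling1 (n k : nat) : nat :=
  match n, k with
  | 0, 0 => 1
  | 0, _.+1 => 0
  | _.+1, 0 => 0
  | n'.+1, k'.+1 => n' * stirling1 n' k'.+1 + stirling1 n' k'
  end.

Fixpoint stirling2 (n k : nat) : nat :=
  match n, k with
  | 0, 0 => 1
  | 0, _.+1 => 0
  | _.+1, 0 => 0
  | n'.+1, k'.+1 => k'.+1 * stirling2 n' k'.+1 + stirling2 n' k'
  end.

(* Main.v *)
Require Import Defs.
From mathcomp Require Import all_boot all_order all_algebra.
From mathcomp Require Import zify ring.
Import GRing.Theory.
Local Open Scope ring_scope.

Lemma s1_small n k : (n < k)%N -> stirling1 n k = 0%N.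
Proof. elim: n k => [|n IH] [|k] //= H. rewrite !IH //; lia. Qed.

Lemma s2_small k j : (k < j)%N -> stirling2 k j = 0%N.
Proof. elim: k j => [|k IH] [|j] //= H. rewrite !IH //; lia. Qed.

Definition a (n k : nat) : int := (-1) ^+ (n + k) * (stirling1 n k)%:R.
Definition T (n j : nat) : int := \sum_(k < n.+1) a n k * (stirling2 k j)%:R.

Lemma aS n k : a n.+1 k.+1 = - (n%:R * a n k.+1) + a n k.
Proof.
rewrite /a [stirling1 n.+1 k.+1]/= natrD natrM addSn !addnS !exprS; ring.
Qed.

Lemma shiftsum n j :
  \sum_(i < n.+1) a n i.+1 * (stirling2 i.+1 j)%:R = T n j - a n 0 * (stirling2 0 j)%:R.
Proof.
set F := fun i : nat => a n i * (stirling2 i j)%:R.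
change (\sum_(i < n.+1) F i.+1 = \sum_(k < n.+1) F k - F 0%N).
have h1 : \sum_(i < n.+2) F i = F 0%N + \sum_(i < n.+1) F i.+1 := big_ord_recl _ _.
have h2 : \sum_(i < n.+2) F i = \sum_(i < n.+1) F i + F n.+1 := big_ord_recr _ _.
have hz : F n.+1 = 0 by rewrite /F /a s1_small // mulr0 mul0r.
move: h1 h2; rewrite hz addr0 => -> <-; ring.
Qed.

Lemma T_eq n j : T n j = (n == j)%:R.
Proof.
elim: n j => [|n IH] j.
  by rewrite /T big_ord1 /a; case: j.
rewrite /T big_ord_recl /a [stirling1 n.+1 0]/= mulr0 mul0r add0r.
rewrite (eq_bigr (fun i : 'I_n.+1 => - (n%:R * (a n i.+1 * (stirling2 i.+1 j)%:R))
     + a n i * (stirling2 i.+1 j)%:R)); last first.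
  by move=> i _; rewrite -/(a _ _) /bump /= aS; ring.
rewrite big_split sumrN -mulr_sumr shiftsum.
have H0 : n%:R * (a n 0 * (stirling2 0 j)%:R) = 0 :> int.
  by case: n {IH} => [|n]; rewrite /a ?mul0r // [stirling1 _ 0]/= mulr0 mul0r mulr0.
rewrite mulrBr H0 subr0 IH.
case: j H0 => [|j] _.
  rewrite big1 ?addr0; last by move=> i _; rewrite [stirling2 _ 0]/= mulr0.
  by case: n {IH} => [|n] /=; rewrite ?mul0r ?oppr0 // mulr0 oppr0.
rewrite (eq_bigr (fun i : 'I_n.+1 => (j.+1)%:R * (a n i * (stirling2 i j.+1)%:R) + a n i * (stirling2 i j)%:R)); last first.
  by move=> i _; rewrite [stirling2 i.+1 j.+1]/= natrD natrM; ring.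
rewrite big_split /= -mulr_sumr -/(T n j.+1) -/(T n j) !IH.
rewrite !eqSS.
case: (eqVneq n j.+1) => [->|].
  by rewrite addrA addNr add0r.
move=> _; rewrite !mulr0 oppr0 !add0r.
by [].
Qed.

Theorem mainTheorem2 (n : nat) :
  \sum_(k < n.+1) \sum_(j < k.+1)
     ((stirling1 n k * stirling2 k j * 'C(n, j))%:R * (-1) ^+ k : int)
  = (-1) ^+ n.
Proof.
transitivity (\sum_(k < n.+1) \sum_(j < n.+1)
     ((stirling1 n k * stirling2 k j * 'C(n, j))%:R * (-1) ^+ k : int)).
  apply: eq_bigr => k _.
  rewrite (big_ord_widen n.+1 (fun j : nat => ((stirling1 n k * stirling2 k j * 'C(n, j))%:R * (-1) ^+ k : int))) ?ltn_ord //.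
  rewrite big_mkcond; apply: eq_bigr => j _; case: ifP => // /negbT.
  by rewrite -leqNgt => H; rewrite s2_small // muln0 mul0n mul0r.
rewrite exchange_big /=.
rewrite (eq_bigr (fun j : 'I_n.+1 => (-1) ^+ n * ('C(n, j))%:R * T n j)); last first.
  move=> j _; rewrite /T mulr_sumr; apply: eq_bigr => k _; rewrite /a !natrM exprD.
  have sq : (-1)^+n * (-1)^+n = 1 :> int.
    by rewrite -expr2 -exprM mulnC exprM sqrrN !expr1n.
  transitivity (((-1)^+n * (-1)^+n) * ((stirling1 n k)%:R * (stirling2 k j)%:R * ('C(n, j))%:R * (-1) ^+ k : int)).
    by rewrite sq mul1r.
  ring.
rewrite (bigD1 ord_max) //= big1 ?addr0; last first.
  move=> j /eqP Hj; rewrite T_eq; case: eqP => [E|]; last by rewrite mulr0.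
  by exfalso; apply: Hj; apply: val_inj; rewrite /= -E.
by rewrite T_eq eqxx binn !mulr1. Qed.
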